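(* Let $\Gamma$ be an oriented hypergraph with $A\neq\mathbf 0$ and strong coloring number $\chi=\chi(\Gamma)$, and suppose $\chi=\dfrac{\lambda_N-\lambda_1}{\lambda_N-1}$. Let $h$ be any eigenfunction of $L$ with eigenvalue $\lambda_1$, and let $V_1,\dots,V_\chi$ be the color classes of any proper strong $\chi$-coloring. Then: (1) $\operatorname{supp}(h)\cap V_i\neq\varnothing$ for all $1\le i\le\chi$; (2) $S^h_{ij}\ge 0$ for all $1\le i<j\le\chi$; (3) for all $1\le i<j\le\chi$, $\mathrm{RQ}(h_{ij})=\lambda_N=\dfrac{\chi-\lambda_1}{\chi-1}$, and $h_{ij}$ is an eigenfunction of $L$ with eigenvalue $\lambda_N$. Consequently the multiplicity $m_\Gamma(\lambda_N)$ of $\lambda_N=(\chi-\lambda_1)/(\chi-1)$ is at least $\chi-1$, and this inequality is strict if $m_\Gamma(\lambda_1)>1$.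
   Context: An oriented hypergraph $\Gamma=(V,E,\varphi)$ consists of a finite vertex set $V$ with $|V|=N$, an edge set $E\subseteq\mathcal P(V)$, and a function $\varphi\colon V\times E\to\{-1,0,1\}$ with $\varphi(v,e)\neq 0$ iff $v\in e$. Two vertices $v,w\in e$ are co-oriented in $e$ if $\varphi(v,e)=\varphi(w,e)$ and anti-oriented in $e$ if $\varphi(v,e)=-\varphi(w,e)$. The degree is $\deg v=|\{e\in E: v\in e\}|$; we assume every vertex has degree at least $1$, and $D=\mathrm{diag}(\deg v)_{v\in V}$. The adjacency matrix $A$ is the $N\times N$ matrix with $A_{v,v}=0$ and, for $v\neq w$, $A_{v,w}=(\#\text{edges in which } v,w \text{ are anti-oriented})-(\#\text{edges in which } v,w \text{ are co-oriented})$. The normalized Laplacian is $L=\mathrm{Id}-D^{-1}A$; it is self-adjoint for $\langle f,g\rangle=\sum_{v}\deg v\, f(v)g(v)$ on functions $V\to\mathbb R$, with (real) eigenvalues $\lambda_1\le\dots\le\lambda_N$; $m_\Gamma(\lambda)$ denotes the multiplicity of $\lambda$. The Rayleigh quotient of $f\neq0$ is $\mathrm{RQ}(f)=\langle Lf,f\rangle/\langle f,f\rangle$. A proper strong $k$-coloring is a map $V\to\{1,\dots,k\}$ such that any two distinct vertices in a common edge receive different colors; $\chi(\Gamma)$ is the least such $k$. For a function $h\colon V\to\mathbb R$ and color classes $V_1,\dots,V_\chi$, define $S^h_{ij}=\sum_{v\in V_i,\,w\in V_j}A_{v,w}h(v)h(w)$, and define $h_{ij}\colon V\to\mathbb R$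 by $h_{ij}(v)=h(v)$ if $v\in V_i$, $h_{ij}(v)=-h(v)$ if $v\in V_j$, and $h_{ij}(v)=0$ otherwise. *)

(* Defs.v *)
From HB Require Import structures.
From mathcomp Require Import all_boot all_order all_algebra.
From mathcomp Require Import reals.
Set Implicit Arguments. Unset Strict Implicit. Unset Printing Implicit Defensive.
Import Order.TTheory GRing.Theory Num.Theory.
Local Open Scope ring_scope.

(* An oriented hypergraph on the vertex set V = 'I_n (N = n vertices):
   an edge set E ⊆ P(V) and an incidence function phi : V × E -> {-1,0,1}. *)
Record ohg (n : nat) := OHG {
  edges  : {set {set 'I_n}};
  orient : 'I_n -> {set 'I_n} -> int }.

Definition deg n (G : ohg n) (v : 'I_n) : nat := #|[set e in edges G | v \in e]|.

Definition wf_ohg n (G : ohg n) : Prop :=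
  (forall v e, e \in edges G -> orient G v e \in [:: -1; 0; 1]%R) /\
  (forall v e, e \in edges G -> (orient G v e != 0) = (v \in e)) /\
  (forall v, (1 <= deg G v)%N).

Section Spectral.
Variable R : realType.
Variable n : nat.
Variable G : ohg n.

Definition adj : 'M[R]_n :=
  \matrix_(v, w) (if v == w then 0 else
     (#|[set e in edges G | [&& v \in e, w \in e & orient G v e == - orient G w e]]|%:R
    - #|[set e in edges G | [&& v \in e, w \in e & orient G v e == orient G w e]]|%:R)).

Definition degmx : 'M[R]_n := diag_mx (\row_v (deg G v)%:R).

Definition laplacian : 'M[R]_n := 1%:M - invmx degmx *m adj.

Definition ip (f g : 'cV[R]_n) : R := \sum_v (deg G v)%:R * f v 0 * g v 0.

Definition RQ (f : 'cV[R]_n) : R := ip (laplacian *m f) f / ip f f.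

Definition is_eigenfun (f : 'cV[R]_n) (l : R) : Prop :=
  f != 0 /\ laplacian *m f = l *: f.

Definition is_eigenvalue (l : R) : Prop := exists f, is_eigenfun f l.

Definition is_min_eigenvalue (l : R) : Prop :=
  is_eigenvalue l /\ forall m, is_eigenvalue m -> l <= m.
Definition is_max_eigenvalue (l : R) : Prop :=
  is_eigenvalue l /\ forall m, is_eigenvalue m -> m <= l.

(* multiplicity m(l) = dimension of the eigenspace {f | L f = l f};
   eigenspace (L^T) l has as row space {u | u *m L^T = l u} = {f^T | L f = l f}.
   (L is self-adjoint, hence diagonalizable, so this is also the algebraic multiplicity.) *)
Definition mult (l : R) : nat := \rank (eigenspace laplacian^T l).

Definition S_h k (c : 'I_n -> 'I_k) (h : 'cV[R]_n) (i j : 'I_k) : R :=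
  \sum_(v | c v == i) \sum_(w | c w == j) adj v w * h v 0 * h w 0.

Definition h_ij k (c : 'I_n -> 'I_k) (h : 'cV[R]_n) (i j : 'I_k) : 'cV[R]_n :=
  \col_v (if c v == i then h v 0 else if c v == j then - h v 0 else 0).

End Spectral.

Definition proper_strong_coloring n (G : ohg n) k (c : 'I_n -> 'I_k) : Prop :=
  forall e, e \in edges G -> forall v w, v \in e -> w \in e -> v != w -> c v != c w.

Definition is_strong_chromatic n (G : ohg n) (chi : nat) : Prop :=
  (exists c : 'I_n -> 'I_chi, proper_strong_coloring G c) /\
  (forall k (c : 'I_n -> 'I_k), proper_strong_coloring G c -> (chi <= k)%N).

(* Main.v *)
Require Import Defs.
From HB Require Import structures.
From mathcomp Require Import all_boot all_order all_algebra.
From mathcomp Require Import reals.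
From mathcomp Require Import sesquilinear spectral complex.
From mathcomp Require Import ring lra.
Set Implicit Arguments. Unset Strict Implicit. Unset Printing Implicit Defensive.
Import Order.TTheory GRing.Theory Num.Theory Num.Def.
Local Open Scope ring_scope.
Lemma toC_conj (R : rcfType) (x : R) : ((real_complex R) x)^* = (real_complex R) x.
Proof. by apply/CrealP; apply/complex_realP; exists x. Qed.

Lemma map_toC_conj (R : rcfType) m k (M : 'M[R]_(m,k)) : map_mx conjC (map_mx (real_complex R) M) = map_mx (real_complex R) M.
Proof. by apply/matrixP=> i j; rewrite !mxE toC_conj. Qed.

Lemma Re_mulC (R : rcfType) (x : R[i]) b : complex.Re (x * (real_complex R) b) = complex.Re x * b.
Proof. by case: x => a c; simpc. Qed.
Lemma Im_mulC (R : rcfType) (x : R[i]) b : complex.Im (x * (real_complex R) b) = complex.Im x * b.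
Proof. by case: x => a c; simpc. Qed.
Lemma Re_Cmul (R : rcfType) (x : R[i]) b : complex.Re ((real_complex R) b * x) = b * complex.Re x.
Proof. by case: x => a c; simpc. Qed.
Lemma Im_Cmul (R : rcfType) (x : R[i]) b : complex.Im ((real_complex R) b * x) = b * complex.Im x.
Proof. by case: x => a c; simpc. Qed.
Lemma Re_sum (R : rcfType) (I : finType) (F : I -> R[i]) : complex.Re (\sum_i F i) = \sum_i complex.Re (F i).
Proof. elim/big_rec2: _ => [//|i a y _ <-]; by case: (F i); case: y. Qed.
Lemma Im_sum (R : rcfType) (I : finType) (F : I -> R[i]) : complex.Im (\sum_i F i) = \sum_i complex.Im (F i).
Proof. elim/big_rec2: _ => [//|i a y _ <-]; by case: (F i); case: y. Qed.

Lemma quad_le (R : rcfType) n (B : 'M[R]_n) (lam : R) :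
  B^T = B ->
  (forall mu (y : 'cV[R]_n), y != 0 -> B *m y = mu *: y -> mu <= lam) ->
  forall g : 'cV[R]_n, (g^T *m B *m g) 0 0 <= lam * (g^T *m g) 0 0.
Proof.
move=> BT Hev g.
set Bc := map_mx (real_complex R) B.
have Bsym : Bc \is symmetricmx.
  apply/is_hermitianmxP; rewrite expr0 scale1r. apply/matrixP=> i j; rewrite !mxE; congr (real_complex R); by rewrite -[in LHS]BT mxE.
have Breal : Bc \is a realmx.
  by apply/mxOverP => i j; rewrite mxE; apply/complex_realP; eexists.
have Bherm := realsym_hermsym Bsym Breal.
have /orthomx_spectralP BE := hermitian_normalmx Bherm.
have Pu : spectralmx Bc \is unitarymx := spectral_unitarymx Bc.
have dreal := hermitian_spectral_diag_real Bherm.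
move: BE Pu dreal.
set P := spectralmx Bc; set d := spectral_diag Bc => BE Pu dreal.
rewrite invmx_unitary // in BE.
have PB : P *m Bc = diag_mx d *m P.
  by rewrite {1}BE !mulmxA (unitarymxP Pu) mul1mx.
have dle : forall k, d 0 k <= (real_complex R) lam.
  move=> k; set w := row k P.
  have wB : w *m Bc = d 0 k *: w.
    by rewrite -row_mul PB; rewrite mul_diag_mx; apply/rowP => j; rewrite !mxE.
  have wn0 : w != 0.
    apply/eqP => w0; have := row_mul k P (map_mx conjC P^T).
    rewrite (unitarymxP Pu) -/w w0 mul0mx => /rowP /(_ k).
    by rewrite !mxE eqxx /= => /eqP; rewrite oner_eq0.
  have dkr : d 0 k \is Num.real by apply: (mxOverP dreal).
  have Imd : complex.Im (d 0 k) = 0.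
    by have := RIm_real dkr => -[].
  set mu := complex.Re (d 0 k).
  have dE : d 0 k = (real_complex R) mu by rewrite /mu RRe_real.
  have key : forall (f : R[i] -> R), (f = @complex.Re R \/ f = @complex.Im R) ->
      B *m (map_mx f w)^T = mu *: (map_mx f w)^T.
    move=> f fE; apply/colP => j; rewrite !mxE.
    have := congr1 (fun M : 'rV_n => f (M 0 j)) wB; rewrite /= !mxE.
    rewrite dE.
    case: fE => ->; rewrite ?Re_sum ?Im_sum ?Re_Cmul ?Im_Cmul => <-;
      apply: eq_bigr => i _; rewrite !mxE ?Re_mulC ?Im_mulC mulrC -[in LHS]BT mxE //.
  rewrite dE lecR.
  have [/eqP wr0|wrn0] := boolP (map_mx (@complex.Re R) w == 0).
    have [/eqP wi0|win0] := boolP (map_mx (@complex.Im R) w == 0).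
      case/negP: wn0; apply/eqP/rowP => j.
      have := congr1 (fun M : 'rV_n => M 0 j) wr0; have := congr1 (fun M : 'rV_n => M 0 j) wi0.
      rewrite !mxE => hi hr; move: hi hr; by case: (P k j) => a b /= -> ->.
    apply: (Hev mu _ _ (key _ (or_intror erefl))).
    by rewrite trmx_eq0.
  apply: (Hev mu _ _ (key _ (or_introl erefl))).
  by rewrite trmx_eq0.
have zle : forall z : 'cV[R[i]]_n,
    (map_mx conjC z^T *m diag_mx d *m z) 0 0 <= (real_complex R) lam * (map_mx conjC z^T *m z) 0 0.
  move=> z; rewrite mul_mx_diag !mxE mulr_sumr -subr_ge0 -sumrB.
  apply: sumr_ge0 => k _; rewrite !mxE.
  have -> : (real_complex R) lam * ((z k 0)^* * z k 0) - (z k 0)^* * d 0 k * z k 0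
     = ((real_complex R) lam - d 0 k) * (z k 0 * (z k 0)^*) by ring.
  by apply: mulr_ge0; [rewrite subr_ge0 | exact: mul_conjC_ge0].
rewrite -lecR rmorphM /=.
have -> : (real_complex R) ((g^T *m B *m g) 0 0) = ((map_mx (real_complex R) g)^T *m Bc *m map_mx (real_complex R) g) 0 0.
  by rewrite /Bc map_trmx -!(map_mxM (real_complex R)) [RHS]mxE.
have -> : (real_complex R) ((g^T *m g) 0 0) = ((map_mx (real_complex R) g)^T *m map_mx (real_complex R) g) 0 0.
  by rewrite map_trmx -!(map_mxM (real_complex R)) [RHS]mxE.
set gc := map_mx (real_complex R) g.
have gcT : gc^T = map_mx conjC gc^T by rewrite /gc map_trmx map_toC_conj.
have PP : map_mx conjC P^T *m P = 1%:M by apply: mulmx1C; apply/unitarymxP.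
have E1 : gc^T *m map_mx conjC P^T = map_mx conjC (P *m gc)^T.
  by rewrite trmx_mul map_mxM -gcT.
have E2 : gc^T *m gc = gc^T *m (map_mx conjC P^T *m P) *m gc by rewrite PP mulmx1.
rewrite BE E2 !mulmxA E1 -!mulmxA.
by have := zle (P *m gc); rewrite !mulmxA.
Qed.
Lemma sumsq_eq0 (R : realFieldType) n (y : 'cV[R]_n) : (y^T *m y) 0 0 = 0 -> y = 0.
Proof.
rewrite mxE => /eqP; rewrite psumr_eq0; last by move=> i _; rewrite mxE -expr2 sqr_ge0.
move=> /allP H; apply/colP => i; rewrite mxE.
by have := H i (mem_index_enum i); rewrite mxE -expr2 sqrf_eq0 => /eqP.
Qed.

Lemma psd0 (R : realFieldType) n (C : 'M[R]_n) : C^T = C ->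
  (forall x : 'cV_n, 0 <= (x^T *m C *m x) 0 0) ->
  forall x : 'cV_n, (x^T *m C *m x) 0 0 = 0 -> C *m x = 0.
Proof.
move=> CT Cpsd x qx; set y := C *m x.
have Exy : (x^T *m C *m y) 0 0 = (y^T *m y) 0 0.
  have -> : (x^T *m C *m y) 0 0 = ((x^T *m C *m y)^T) 0 0 by rewrite [RHS]mxE.
  by rewrite !trmx_mul trmxK CT.
have Eyx : (y^T *m C *m x) 0 0 = (y^T *m y) 0 0 by rewrite -mulmxA.
set Y := (y^T *m y) 0 0; set Q := (y^T *m C *m y) 0 0.
have Y0 : 0 <= Y by rewrite /Y mxE; apply: sumr_ge0 => i _; rewrite mxE -expr2 sqr_ge0.
have Q0 : 0 <= Q := Cpsd y.
have key : forall t, 0 <= - (2 * t * Y) + t ^+ 2 * Q.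
  move=> t; have := Cpsd (x - t *: y).
  rewrite mulmxBr (_ : (x - t *: y)^T = x^T - t *: y^T); last by rewrite linearB linearZ.
  rewrite !mulmxBl -!scalemxAl -!scalemxAr scalerA.
  move: Exy Eyx qx Y0 Q0; rewrite /Y /Q !mxE => -> -> -> Y0 Q0.
  by move=> H; rewrite expr2; lra.
have YE : Y = 0.
  have := key (Y / (Q + 1)); set t := Y / (Q + 1) => H.
  have Q1 : 0 < Q + 1 by lra.
  have tE : t * (Q + 1) = Y by rewrite /t mulfVK // gt_eqF.
  have : 0 <= t by rewrite /t divr_ge0 // ltW.
  nra.
by apply: sumsq_eq0.
Qed.
Lemma adjT (R : realType) n (G : ohg n) : (adj R G)^T = adj R G.
Proof.
apply/matrixP => v w; rewrite !mxE eq_sym; case: eqP => // _.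
congr (_%:R - _%:R); apply: eq_card => e; rewrite !inE.
  by case: (e \in edges G) (v \in e) (w \in e) => [] [] [] //=; apply/eqP/eqP => ->; rewrite opprK.
by case: (e \in edges G) (v \in e) (w \in e) => [] [] [] //=; rewrite eq_sym.
Qed.

Lemma adj_same (R : realType) n (G : ohg n) k (c : 'I_n -> 'I_k) v w :
  proper_strong_coloring G c -> c v = c w -> adj R G v w = 0.
Proof.
move=> pc cvw; rewrite mxE; case: eqP => // /eqP vw.
have E : forall P, [set e in edges G | [&& v \in e, w \in e & P e]] = set0.
  move=> P; apply/setP => e; rewrite !inE.
  apply/negP => /and4P [eE ve we _]; by move: (pc e eE v w ve we vw); rewrite cvw eqxx.
by rewrite !E !cards0 subrr.
Qed.

Lemma deg_gt0 (R : realType) n (G : ohg n) v : wf_ohg G -> 0 < (deg G v)%:R :> R.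
Proof. by case=> _ [_ H]; rewrite ltr0n; apply: H. Qed.

Lemma invdeg (R : realType) n (G : ohg n) : wf_ohg G ->
  invmx (degmx R G) = diag_mx (\row_v ((deg G v)%:R)^-1).
Proof.
move=> wf; set Di := diag_mx _.
have H : Di *m degmx R G = 1%:M.
  apply/matrixP => i j; rewrite mul_diag_mx !mxE.
  case: (eqVneq i j) => [->|ij]; rewrite ?eqxx ?(negbTE ij) /= ?mulr0n ?mulr1n ?mulr0 //.
  by rewrite mulVf // gt_eqF // deg_gt0.
have H2 := mulmx1C H.
have U : degmx R G \in unitmx by case/mulmx1_unit: H2.
by rewrite -[invmx _]mulmx1 -H2 mulmxA mulVmx // mul1mx.
Qed.

Lemma Lf (R : realType) n (G : ohg n) (f : 'cV[R]_n) v : wf_ohg G ->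
  (laplacian R G *m f) v 0 = f v 0 - ((deg G v)%:R)^-1 * \sum_w adj R G v w * f w 0.
Proof.
move=> wf; rewrite /laplacian mulmxBl mul1mx invdeg // -mulmxA mul_diag_mx !mxE.
by [].
Qed.

Definition aform (R : realType) n (G : ohg n) (f g : 'cV[R]_n) : R :=
  \sum_v \sum_w adj R G v w * f v 0 * g w 0.

Lemma ipL (R : realType) n (G : ohg n) (f : 'cV[R]_n) : wf_ohg G ->
  ip G (laplacian R G *m f) f = ip G f f - aform G f f.
Proof.
move=> wf; rewrite /ip /aform -sumrB; apply: eq_bigr => v _.
rewrite Lf // mulrBr mulrBl mulrA mulfV ?gt_eqF ?deg_gt0 // mul1r.
rewrite mulr_suml; congr (_ - _); apply: eq_bigr => w _; ring.
Qed.

Lemma sum_delta (R : realType) n (v : 'I_n) (F : 'I_n -> R) :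
  \sum_w (v == w)%:R * F w = F v.
Proof.
rewrite (bigD1 v) //= eqxx mul1r big1 ?addr0 // => w wv.
by rewrite eq_sym (negbTE wv) mul0r.
Qed.

Definition sq (R : realType) n (G : ohg n) v : R := Num.sqrt (deg G v)%:R.

Definition Bm (R : realType) n (G : ohg n) : 'M[R]_n :=
  \matrix_(v, w) ((v == w)%:R - adj R G v w / (sq R G v * sq R G w)).

Definition Scol (R : realType) n (G : ohg n) (f : 'cV[R]_n) : 'cV[R]_n :=
  \col_v (sq R G v * f v 0).

Lemma sq_gt0 (R : realType) n (G : ohg n) v : wf_ohg G -> 0 < sq R G v.
Proof. by move=> wf; rewrite sqrtr_gt0 deg_gt0. Qed.

Lemma sq_sq (R : realType) n (G : ohg n) v : sq R G v * sq R G v = (deg G v)%:R.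
Proof. by rewrite -expr2 sqr_sqrtr // ler0n. Qed.

Lemma BmE (R : realType) n (G : ohg n) v w :
  Bm R G v w = (v == w)%:R - adj R G v w / (sq R G v * sq R G w).
Proof. by rewrite [LHS]mxE. Qed.

Lemma BmT (R : realType) n (G : ohg n) : (Bm R G)^T = Bm R G.
Proof.
apply/matrixP => v w; rewrite [LHS]mxE !BmE eq_sym.
have := congr1 (fun M : 'M[R]_n => M w v) (adjT R G); rewrite [LHS]mxE => ->.
by rewrite [sq R G w * _]mulrC.
Qed.

Lemma Bm_S (R : realType) n (G : ohg n) (f : 'cV[R]_n) v : wf_ohg G ->
  (Bm R G *m Scol G f) v 0 = sq R G v * (laplacian R G *m f) v 0.
Proof.
move=> wf; rewrite Lf // [LHS]mxE.
under eq_bigr => w _ do rewrite BmE [Scol _ _ w 0]mxE mulrBl.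
rewrite sumrB sum_delta mulrBr; congr (_ - _).
rewrite !mulr_sumr; apply: eq_bigr => w _.
have hv : 0 < sq R G v by apply: sq_gt0.
have hw : 0 < sq R G w by apply: sq_gt0.
rewrite -(sq_sq R G v); field.
by rewrite !gt_eqF.
Qed.

Lemma Bm_quad (R : realType) n (G : ohg n) (f : 'cV[R]_n) : wf_ohg G ->
  ((Scol G f)^T *m Bm R G *m Scol G f) 0 0 = ip G (laplacian R G *m f) f.
Proof.
move=> wf; rewrite -mulmxA mxE /ip; apply: eq_bigr => v _.
rewrite Bm_S // !mxE -(sq_sq R G v); ring.
Qed.

Lemma Scol_norm (R : realType) n (G : ohg n) (f : 'cV[R]_n) :
  ((Scol G f)^T *m Scol G f) 0 0 = ip G f f.
Proof.
rewrite mxE /ip; apply: eq_bigr => v _.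
rewrite !mxE -(sq_sq R G v); ring.
Qed.

Lemma Scol_surj (R : realType) n (G : ohg n) (y : 'cV[R]_n) : wf_ohg G ->
  Scol G (\col_v (y v 0 / sq R G v)) = y.
Proof.
move=> wf; apply/colP => v; rewrite !mxE mulrC mulfVK //.
by rewrite gt_eqF // sq_gt0.
Qed.

Lemma Lf_of_Bm (R : realType) n (G : ohg n) (f : 'cV[R]_n) mu : wf_ohg G ->
  Bm R G *m Scol G f = mu *: Scol G f -> laplacian R G *m f = mu *: f.
Proof.
move=> wf E; apply/colP => v.
have := congr1 (fun M : 'cV_n => M v 0) E; rewrite Bm_S // !mxE.
rewrite mulrCA => /mulfI -> //.
by rewrite gt_eqF // sq_gt0.
Qed.

Lemma Scol_eq0 (R : realType) n (G : ohg n) (f : 'cV[R]_n) : wf_ohg G ->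
  (Scol G f == 0) = (f == 0).
Proof.
move=> wf; apply/eqP/eqP => [E|->]; apply/colP => v.
  have := congr1 (fun M : 'cV_n => M v 0) E; rewrite !mxE => /eqP.
  by rewrite mulf_eq0 gt_eqF ?sq_gt0 //= => /eqP.
by rewrite !mxE mulr0.
Qed.

Lemma Kineq (R : realType) n (G : ohg n) lN : wf_ohg G -> is_max_eigenvalue G lN ->
  forall f, ip G (laplacian R G *m f) f <= lN * ip G f f.
Proof.
move=> wf [_ Hmax] f; rewrite -Bm_quad // -Scol_norm.
apply: quad_le; first exact: BmT.
move=> mu y yn0 Ey; apply: Hmax; exists (\col_v (y v 0 / sq R G v)).
split; last by apply: Lf_of_Bm => //; rewrite Scol_surj.
by rewrite -(Scol_eq0 _ wf) Scol_surj.
Qed.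

Lemma Eeq (R : realType) n (G : ohg n) lN : wf_ohg G -> is_max_eigenvalue G lN ->
  forall f, ip G (laplacian R G *m f) f = lN * ip G f f -> laplacian R G *m f = lN *: f.
Proof.
move=> wf Hm f E; apply: (Lf_of_Bm wf); apply/eqP; rewrite -subr_eq0; apply/eqP.
set C := lN%:M - Bm R G.
have CT : C^T = C by rewrite /C linearB /= tr_scalar_mx BmT.
have q : forall x : 'cV_n, (x^T *m C *m x) 0 0 = lN * (x^T *m x) 0 0 - (x^T *m Bm R G *m x) 0 0.
  move=> x; rewrite /C mulmxBr mulmxBl mul_mx_scalar -scalemxAl. by rewrite !mxE.
have Cpsd : forall x : 'cV_n, 0 <= (x^T *m C *m x) 0 0.
  move=> x; rewrite q subr_ge0 -(Scol_surj x wf) Bm_quad // Scol_norm.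
  exact: Kineq.
have := psd0 CT Cpsd (x := Scol G f); rewrite q Bm_quad // Scol_norm E subrr.
move=> /(_ erefl); rewrite /C mulmxBl mul_scalar_mx => H; by rewrite -opprB H oppr0.
Qed.

Definition nc (R : realType) n (G : ohg n) k (c : 'I_n -> 'I_k) (h : 'cV[R]_n) i : R :=
  \sum_(v | c v == i) (deg G v)%:R * h v 0 * h v 0.

Definition hsig (R : realType) n k (c : 'I_n -> 'I_k) (h : 'cV[R]_n) (s : 'I_k -> R) : 'cV[R]_n :=
  \col_v (s (c v) * h v 0).

Lemma part_sum (R : realType) n k (c : 'I_n -> 'I_k) (F : 'I_n -> R) :
  \sum_v F v = \sum_i \sum_(v | c v == i) F v.
Proof. by rewrite (partition_big c xpredT) //. Qed.

Lemma ip_sig (R : realType) n (G : ohg n) k (c : 'I_n -> 'I_k) (h : 'cV[R]_n) s :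
  ip G (hsig c h s) (hsig c h s) = \sum_i s i * (s i * nc G c h i).
Proof.
rewrite /ip (part_sum c); apply: eq_bigr => i _.
rewrite /nc !mulr_sumr; apply: eq_bigr => v /eqP cv.
by rewrite !mxE cv; ring.
Qed.

Lemma a_sig (R : realType) n (G : ohg n) k (c : 'I_n -> 'I_k) (h : 'cV[R]_n) s :
  aform G (hsig c h s) (hsig c h s) = \sum_i s i * \sum_j s j * S_h G c h i j.
Proof.
rewrite /aform (part_sum c); apply: eq_bigr => i _.
under eq_bigr => v _ do rewrite (part_sum c).
rewrite exchange_big /= mulr_sumr; apply: eq_bigr => j _.
rewrite /S_h !mulr_sumr; apply: eq_bigr => v /eqP cv.
rewrite !mulr_sumr; apply: eq_bigr => w /eqP cw.
by rewrite !mxE cv cw; ring.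
Qed.

Lemma hsig1 (R : realType) n k (c : 'I_n -> 'I_k) (h : 'cV[R]_n) : hsig c h (fun _ => 1) = h.
Proof. by apply/colP => v; rewrite mxE mul1r. Qed.


Definition sg2 (R : realType) k (i j : 'I_k) (l : 'I_k) : R :=
  if l == i then 1 else if l == j then -1 else 0.

Lemma hsig_ij (R : realType) n k (c : 'I_n -> 'I_k) (h : 'cV[R]_n) i j :
  hsig c h (sg2 R i j) = h_ij c h i j.
Proof.
apply/colP => v; rewrite !mxE /sg2.
by case: (c v == i); case: (c v == j); rewrite ?mul1r ?mulN1r ?mul0r.
Qed.

Lemma sum_sg2 (R : realType) k (i j : 'I_k) (F : 'I_k -> R) : i != j ->
  \sum_l sg2 R i j l * F l = F i - F j.
Proof.
move=> ij; rewrite (bigD1 i) //= (bigD1 j) 1?eq_sym //= big1.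
  by rewrite /sg2 eqxx eq_sym (negbTE ij) eqxx mul1r mulN1r addr0.
move=> l /andP [li lj]; by rewrite /sg2 (negbTE li) (negbTE lj) mul0r.
Qed.

Lemma S_same (R : realType) n (G : ohg n) k (c : 'I_n -> 'I_k) (h : 'cV[R]_n) i :
  proper_strong_coloring G c -> S_h G c h i i = 0.
Proof.
move=> pc; rewrite /S_h big1 // => v /eqP cv; rewrite big1 // => w /eqP cw.
by rewrite (adj_same R pc (_ : c v = c w)) ?mul0r // cv cw.
Qed.

Lemma S_sym (R : realType) n (G : ohg n) k (c : 'I_n -> 'I_k) (h : 'cV[R]_n) i j :
  S_h G c h i j = S_h G c h j i.
Proof.
rewrite /S_h exchange_big; apply: eq_bigr => w _; apply: eq_bigr => v _.
have := congr1 (fun M : 'M[R]_n => M w v) (adjT R G); rewrite [LHS]mxE => ->.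
ring.
Qed.

Lemma ip_hij (R : realType) n (G : ohg n) k (c : 'I_n -> 'I_k) (h : 'cV[R]_n) i j :
  i != j -> ip G (h_ij c h i j) (h_ij c h i j) = nc G c h i + nc G c h j.
Proof.
move=> ij; rewrite -hsig_ij ip_sig sum_sg2 // /sg2 eqxx eq_sym (negbTE ij) eqxx.
ring.
Qed.

Lemma a_hij (R : realType) n (G : ohg n) k (c : 'I_n -> 'I_k) (h : 'cV[R]_n) i j :
  proper_strong_coloring G c -> i != j ->
  aform G (h_ij c h i j) (h_ij c h i j) = - 2 * S_h G c h i j.
Proof.
move=> pc ij; rewrite -hsig_ij a_sig sum_sg2 // !sum_sg2 // !S_same // (S_sym G c h j i).
ring.
Qed.

Lemma sum_neq (R : realType) k (i : 'I_k) (F : 'I_k -> R) :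
  \sum_(j | j != i) F j = \sum_j F j - F i.
Proof. by rewrite [X in _ = X - _](bigD1 i) //= addrC addrK. Qed.

Lemma ipZ (R : realType) n (G : ohg n) (f g : 'cV[R]_n) (a : R) :
  ip G (a *: f) g = a * ip G f g.
Proof. rewrite /ip mulr_sumr; apply: eq_bigr => v _; rewrite mxE; ring. Qed.

Lemma ip_ge0 (R : realType) n (G : ohg n) (f : 'cV[R]_n) : 0 <= ip G f f.
Proof.
apply: sumr_ge0 => v _; rewrite -mulrA mulr_ge0 ?ler0n //.
by rewrite -expr2 sqr_ge0.
Qed.

Lemma ip_eq0 (R : realType) n (G : ohg n) (f : 'cV[R]_n) : wf_ohg G -> ip G f f = 0 -> f = 0.
Proof.
move=> wf E; apply/colP => v; rewrite mxE.
have H0 : forall w : 'I_n, xpredT w -> 0 <= (deg G w)%:R * f w 0 * f w 0.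
  move=> w _; rewrite -mulrA mulr_ge0 ?ler0n //; by rewrite -expr2 sqr_ge0.
have /eqP := psumr_eq0P H0 E (i:=v) isT.
rewrite -mulrA mulf_eq0 gt_eqF ?deg_gt0 //= -expr2 sqrf_eq0 => /eqP //=.
Qed.

Lemma nc_ge0 (R : realType) n (G : ohg n) k (c : 'I_n -> 'I_k) (h : 'cV[R]_n) i :
  0 <= nc G c h i.
Proof.
apply: sumr_ge0 => v _; rewrite -mulrA mulr_ge0 ?ler0n //.
by rewrite -expr2 sqr_ge0.
Qed.

Lemma slack0 (R : realType) n (G : ohg n) chi (c : 'I_n -> 'I_chi) (h : 'cV[R]_n) l1 lN :
  wf_ohg G -> is_max_eigenvalue G lN -> proper_strong_coloring G c ->
  laplacian R G *m h = l1 *: h -> chi%:R * (lN - 1) = lN - l1 ->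
  forall i j : 'I_chi, i != j ->
   lN * (nc G c h i + nc G c h j) = nc G c h i + nc G c h j + 2 * S_h G c h i j.
Proof.
move=> wf Hm pc Eh Hchi.
set sl := fun i j => (lN - 1) * nc G c h i + ((lN - 1) * nc G c h j - 2 * S_h G c h i j).
have slge : forall i j, i != j -> 0 <= sl i j.
  move=> i j ij; have := Kineq wf Hm (h_ij c h i j).
  rewrite ipL // ip_hij // a_hij // /sl => H; lra.
set N := \sum_i nc G c h i.
have ipN : ip G h h = N.
  by rewrite -{1 2}(hsig1 c h) ip_sig; apply: eq_bigr => i _; rewrite !mul1r.
have aN : \sum_i \sum_j S_h G c h i j = N - l1 * N.
  have ah : aform G h h = \sum_i \sum_j S_h G c h i j.
    rewrite -{1 2}(hsig1 c h) a_sig; apply: eq_bigr => i _; rewrite mul1r.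
    by apply: eq_bigr => j _; rewrite mul1r.
  have := ipL h wf; rewrite Eh ipZ ah ipN => ->; ring.
have tot : \sum_i \sum_(j | j != i) sl i j = 0.
  under eq_bigr => i _ do rewrite sum_neq.
  rewrite sumrB.
  have -> : \sum_i sl i i = \sum_i (2 * (lN - 1)) * nc G c h i.
    by apply: eq_bigr => i _; rewrite /sl S_same //; ring.
  rewrite -mulr_sumr -/N.
  under eq_bigr => i _ do rewrite /sl big_split /= sumrB -mulr_sumr -mulr_sumr sumr_const card_ord -/N.
  rewrite big_split /= sumrB sumr_const card_ord.
  under eq_bigr => i _ do rewrite -mulr_natr.
  rewrite -mulr_sumr -mulr_suml -/N.
  have -> : \sum_i \sum_j 2 * S_h G c h i j = 2 * (N - l1 * N).
    by rewrite -aN mulr_sumr; apply: eq_bigr => i _; rewrite mulr_sumr.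
  rewrite -mulr_natr.
  transitivity (2 * N * (chi%:R * (lN - 1) - (lN - l1))); first by ring.
  by rewrite Hchi subrr mulr0.
move=> i j ij.
have inner0 : forall i, \sum_(j | j != i) sl i j = 0.
  move=> i'.
  have H : forall i, true -> 0 <= \sum_(j | j != i) sl i j.
    by move=> i0 _; apply: sumr_ge0 => j' ji; apply: slge; rewrite eq_sym.
  exact: (psumr_eq0P H tot (i:=i') isT).
have H : forall j', j' != i -> 0 <= sl i j' by move=> j' ji; apply: slge; rewrite eq_sym.
have := psumr_eq0P H (inner0 i) (i:=j); rewrite eq_sym => /(_ ij).
rewrite /sl => H2; lra.
Qed.

Lemma lN_formula (R : realType) (chi : nat) (l1 lN : R) :
  (1 < chi)%N -> chi%:R * (lN - 1) = lN - l1 -> lN = (chi%:R - l1) / (chi%:R - 1).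
Proof.
move=> c2 Hchi.
have c1 : chi%:R - 1 != 0 :> R.
  have : (2%:R <= chi%:R :> R) by rewrite ler_nat.
  by move=> H; apply/eqP => H1; lra.
have -> : chi%:R - l1 = lN * (chi%:R - 1) by lra.
by rewrite mulfK.
Qed.

Lemma per_h (R : realType) n (G : ohg n) chi (c : 'I_n -> 'I_chi) (h : 'cV[R]_n) l1 lN :
  wf_ohg G -> is_max_eigenvalue G lN -> proper_strong_coloring G c ->
  is_eigenfun G h l1 -> chi%:R * (lN - 1) = lN - l1 -> 1 < lN -> (1 < chi)%N ->
  (forall i : 'I_chi, exists v, h v 0 != 0 /\ c v = i) /\
  (forall i j : 'I_chi, (i < j)%N -> 0 <= S_h G c h i j) /\
  (forall i j : 'I_chi, (i < j)%N ->
        RQ G (h_ij c h i j) = lN /\ lN = (chi%:R - l1) / (chi%:R - 1) /\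
        is_eigenfun G (h_ij c h i j) lN).
Proof.
move=> wf Hm pc [hn0 Eh] Hchi lN1 chi2.
have sl := slack0 wf Hm pc Eh Hchi.
have supp : forall i, exists v, h v 0 != 0 /\ c v = i.
  move=> i; have [/existsP [v /andP [hv /eqP cv]]|/existsPn nE] :=
    boolP [exists v, (h v 0 != 0) && (c v == i)]; first by exists v.
  exfalso; case/negP: hn0; apply/eqP.
  have hz : forall v, c v = i -> h v 0 = 0.
    by move=> v cv; have := nE v; rewrite cv eqxx andbT negbK => /eqP.
  have nci : nc G c h i = 0.
    by rewrite /nc big1 // => v /eqP /hz ->; rewrite !mulr0.
  have Si : forall j, S_h G c h i j = 0.
    move=> j; rewrite /S_h big1 // => v /eqP /hz hv.
    by rewrite big1 // => w _; rewrite hv mulr0 mul0r.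
  have ncj : forall j, nc G c h j = 0.
    move=> j; case: (eqVneq i j) => [<-//|ij].
    have := sl i j ij; rewrite nci Si add0r mulr0 addr0 => E.
    have : (lN - 1) * nc G c h j = 0 by lra.
    by move/eqP; rewrite mulf_eq0 => /orP [/eqP H|/eqP //]; lra.
  apply: (ip_eq0 wf); rewrite -(hsig1 c h) ip_sig big1 // => j _.
  by rewrite ncj !mulr0.
have ncpos : forall i, 0 < nc G c h i.
  move=> i; have [v [hv cv]] := supp i.
  rewrite /nc (bigD1 v) /=; last by rewrite cv.
  have H1 : 0 < (deg G v)%:R * h v 0 * h v 0.
    by rewrite -mulrA mulr_gt0 ?deg_gt0 // -expr2 exprn_even_gt0 //.
  have H2 : 0 <= \sum_(w | (c w == i) && (w != v)) (deg G w)%:R * h w 0 * h w 0.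
    by apply: sumr_ge0 => w _; rewrite -mulrA mulr_ge0 ?ler0n // -expr2 sqr_ge0.
  lra.
have Hpair : forall i j : 'I_chi, (i < j)%N -> i != j.
  by move=> i j ij; rewrite neq_ltn ij.
split => //; split.
  move=> i j /Hpair ij; have := sl i j ij.
  have := ncpos i; have := ncpos j; nra.
move=> i j /Hpair ij; have E := sl i j ij.
have x0 := ncpos i; have x1 := ncpos j.
have Q : ip G (laplacian R G *m h_ij c h i j) (h_ij c h i j)
    = lN * ip G (h_ij c h i j) (h_ij c h i j).
  by rewrite ipL // ip_hij // a_hij // E; ring.
have ipp : ip G (h_ij c h i j) (h_ij c h i j) != 0 by rewrite ip_hij // gt_eqF //; lra.
split; first by rewrite /RQ Q mulfK.
split; first exact: lN_formula.
split; last exact: Eeq.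
by apply: contra ipp => /eqP ->; rewrite /ip big1 // => v _; rewrite mxE !mulr0.
Qed.

Lemma free_of (F : fieldType) k n (M : 'M[F]_(k, n)) :
  (forall u : 'rV_k, u *m M = 0 -> u = 0) -> row_free M.
Proof.
move=> H; rewrite -kermx_eq0 -submx0; apply/row_subP => i.
rewrite submx0; apply/eqP; apply: H; apply/sub_kermxP; exact: row_sub.
Qed.

Lemma rank_le (F : fieldType) k n (M : 'M[F]_(k, n)) (E : 'M[F]_n) :
  row_free M -> (M <= E)%MS -> (k <= \rank E)%N.
Proof. by move=> /eqP Mf ME; rewrite -[X in (X <= _)%N]Mf; apply: mxrankS. Qed.

Lemma eig_sub (R : realType) n (G : ohg n) k (M : 'M[R]_(k, n)) mu :
  (forall i, laplacian R G *m (row i M)^T = mu *: (row i M)^T) ->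
  (M <= eigenspace (laplacian R G)^T mu)%MS.
Proof.
move=> H; apply/row_subP => i; apply/eigenspaceP.
by rewrite -[row i M]trmxK -trmx_mul H linearZ.
Qed.

Lemma hij_val n k (c : 'I_n -> 'I_k) (R : realType) (h : 'cV[R]_n) i j v :
  h_ij c h i j v 0 = if c v == i then h v 0 else if c v == j then - h v 0 else 0.
Proof. by rewrite mxE. Qed.

Lemma mult_lower (R : realType) n (G : ohg n) chi (c : 'I_n -> 'I_chi) (h : 'cV[R]_n) l1 lN :
  wf_ohg G -> is_max_eigenvalue G lN -> proper_strong_coloring G c ->
  is_eigenfun G h l1 -> chi%:R * (lN - 1) = lN - l1 -> 1 < lN -> (1 < chi)%N ->
  (chi.-1 <= mult G lN)%N.
Proof.
move=> wf Hm pc eh Hchi lN1 chi2.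
have [supp [_ H3]] := per_h wf Hm pc eh Hchi lN1 chi2.
have chi0 : (0 < chi)%N by apply: ltnW.
set i0 : 'I_chi := Ordinal chi0.
set Mx := \matrix_(j < chi.-1, v < n) h_ij c h i0 (lift i0 j) v 0.
have rowM : forall j, (row j Mx)^T = h_ij c h i0 (lift i0 j).
  by move=> j; apply/colP => v; rewrite !mxE.
have lt0 : forall j, (i0 < lift i0 j)%N by move=> j; rewrite /= /bump leq0n.
apply: (@rank_le _ _ _ Mx).
  apply: free_of => u uM; apply/rowP => j; rewrite mxE.
  have [v [hv cv]] := supp (lift i0 j).
  have := congr1 (fun M : 'rV_n => M 0 v) uM; rewrite !mxE.
  rewrite (bigD1 j) //= big1; last first.
    move=> k kj; rewrite !mxE cv eq_sym (negbTE (neq_lift _ _)) (inj_eq lift_inj).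
    by rewrite eq_sym (negbTE kj) mulr0.
  rewrite !mxE cv eq_sym (negbTE (neq_lift _ _)) eqxx addr0 mulrN => /eqP.
  by rewrite oppr_eq0 mulf_eq0 (negbTE hv) orbF => /eqP.
apply: eig_sub => j; rewrite rowM.
by have [_ [_ [_ ->]]] := H3 _ _ (lt0 j).
Qed.

Lemma entry_comb (R : realType) n m (u1 : 'rV[R]_m) (u2 : 'rV[R]_1) (M : 'M[R]_(m, n))
  (gr : 'M[R]_(1, n)) v :
  (u1 *m M + u2 *m gr) 0 v = \sum_k u1 0 k * M k v + u2 0 0 * gr 0 v.
Proof. by rewrite !mxE big_ord1. Qed.

Lemma comb_entry (R : realType) n (f g : 'cV[R]_n) (a b : R) v :
  (a *: f + b *: g) v 0 = a * f v 0 + b * g v 0.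
Proof. by rewrite !mxE. Qed.

Lemma mult_strict (R : realType) n (G : ohg n) chi (c : 'I_n -> 'I_chi) (l1 lN : R) :
  wf_ohg G -> is_max_eigenvalue G lN -> proper_strong_coloring G c ->
  chi%:R * (lN - 1) = lN - l1 -> 1 < lN -> (1 < chi)%N ->
  (1 < mult G l1)%N -> (chi.-1 < mult G lN)%N.
Proof.
move=> wf Hm pc Hchi lN1 chi2 m1.
set E1 := eigenspace (laplacian R G)^T l1.
set r := \rank E1.
set B := row_base E1.
have Bfree : row_free B := row_base_free E1.
have BE : (B <= E1)%MS by rewrite eq_row_base.
have r0 : (0 < r)%N by apply: ltnW.
set k0 : 'I_r := Ordinal r0; set k1 : 'I_r := Ordinal m1.
have k01 : k0 != k1 by [].
have rowEig : forall x : 'rV_n, (x <= E1)%MS -> laplacian R G *m x^T = l1 *: x^T.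
  by move=> x /eigenspaceP H; rewrite -[LHS]trmxK trmx_mul trmxK H linearZ.
have combE : forall a b, laplacian R G *m (a *: (row k0 B)^T + b *: (row k1 B)^T)
                        = l1 *: (a *: (row k0 B)^T + b *: (row k1 B)^T).
  move=> a b; rewrite mulmxDr -!scalemxAr !rowEig ?(submx_trans (row_sub _ _) BE) //.
  by rewrite scalerDr !scalerA [l1 * a]mulrC [l1 * b]mulrC.
have comb0 : forall a b, a *: (row k0 B)^T + b *: (row k1 B)^T = 0 -> a = 0 /\ b = 0.
  move=> a b H.
  have H2 : (a *: (delta_mx 0 k0 : 'rV_r) + b *: (delta_mx 0 k1 : 'rV_r)) *m B = 0.
    rewrite mulmxDl -!scalemxAl -!rowE; apply: trmx_inj.
    by rewrite linearD !linearZ /= H trmx0.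
  move: H2 => /eqP; rewrite mulmx_free_eq0 // => /eqP H3.
  have := congr1 (fun M : 'rV_r => M 0 k0) H3; have := congr1 (fun M : 'rV_r => M 0 k1) H3.
  rewrite !mxE !eqxx /= !mulr1 !mulr0 addr0 add0r.
  by move=> -> ->.
set f := (row k0 B)^T; set g := (row k1 B)^T.
have ef : is_eigenfun G f l1.
  split; last by have := combE 1 0; rewrite !scale1r !scale0r !addr0.
  apply/eqP => f0; have [] := comb0 1 0; last by move=> /eqP; rewrite oner_eq0.
  by rewrite scale1r scale0r addr0.
have eg : is_eigenfun G g l1.
  split; last by have := combE 0 1; rewrite !scale1r !scale0r !add0r.
  apply/eqP => g0; have [] := comb0 0 1; last by move=> _ /eqP; rewrite oner_eq0.
  by rewrite scale1r scale0r add0r.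
have [suppf [_ H3f]] := per_h wf Hm pc ef Hchi lN1 chi2.
have [_ [_ H3g]] := per_h wf Hm pc eg Hchi lN1 chi2.
have chi0 : (0 < chi)%N by apply: ltnW.
set i0 : 'I_chi := Ordinal chi0.
have chi1 : (0 < chi.-1)%N by rewrite -ltnS prednK.
set j0 : 'I_chi.-1 := Ordinal chi1.
set i1 := lift i0 j0.
set Mx := \matrix_(j < chi.-1, v < n) h_ij c f i0 (lift i0 j) v 0.
set gr := (h_ij c g i0 i1)^T.
have rowM : forall j, (row j Mx)^T = h_ij c f i0 (lift i0 j).
  by move=> j; apply/colP => v; rewrite !mxE.
have lt0 : forall j, (i0 < lift i0 j)%N by move=> j; rewrite /= /bump leq0n.
have -> : chi.-1.+1 = (chi.-1 + 1)%N by rewrite addn1.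
apply: (@rank_le _ _ _ (col_mx Mx gr)); last first.
  rewrite col_mx_sub; apply/andP; split.
    apply: eig_sub => j; rewrite rowM.
    by have [_ [_ [_ ->]]] := H3f _ _ (lt0 j).
  apply: eig_sub => j; rewrite row_id /gr trmxK.
  by have [_ [_ [_ ->]]] := H3g _ _ (lt0 j0).
apply: free_of => u.
rewrite -[u]hsubmxK mul_row_col; set u1 := lsubmx u; set u2 := rsubmx u.
move=> H.
have Hv : forall v, \sum_k u1 0 k * h_ij c f i0 (lift i0 k) v 0 + u2 0 0 * h_ij c g i0 i1 v 0 = 0.
  move=> v; have := congr1 (fun M : 'rV_n => M 0 v) H; rewrite entry_comb [_ 0 v]mxE.
  under eq_bigr => k _ do rewrite [Mx k v]mxE.
  by move=> ->; rewrite mxE.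
have step1 : forall j, j != j0 -> u1 0 j = 0.
  move=> j jj0; have [v [fv cv]] := suppf (lift i0 j).
  have := Hv v; rewrite (bigD1 j) //= big1; last first.
    move=> k kj; rewrite hij_val cv eq_sym (negbTE (neq_lift _ _)) (inj_eq lift_inj).
    by rewrite eq_sym (negbTE kj) mulr0.
  rewrite !hij_val cv eq_sym (negbTE (neq_lift _ _)) eqxx.
  rewrite /i1 (inj_eq lift_inj) (negbTE jj0) mulr0 !addr0 mulrN => /eqP.
  by rewrite oppr_eq0 mulf_eq0 (negbTE fv) orbF => /eqP.
set kk := u1 0 j0 *: f + u2 0 0 *: g.
have kk0 : kk = 0.
  apply/eqP; apply: contraT => kn0.
  have ek : is_eigenfun G kk l1.
    by split => //; exact: combE.
  have [supk _] := per_h wf Hm pc ek Hchi lN1 chi2.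
  have [v [kv cv]] := supk i0.
  have := Hv v; rewrite (bigD1 j0) //= big1; last first.
    by move=> k kj; rewrite step1 // mul0r.
  rewrite !hij_val cv eqxx addr0 => E.
  by move: kv; rewrite /kk comb_entry E eqxx.
have [a0 b0] := comb0 _ _ kk0.
have u1z : u1 = 0.
  apply/rowP => j; rewrite [RHS]mxE; case: (eqVneq j j0) => [->|jj]; [exact: a0 | exact: step1].
have u2z : u2 = 0 by apply/rowP => j; rewrite [RHS]mxE (ord1 j).
by rewrite u1z u2z; apply/eqP; rewrite row_mx_eq0 !eqxx.
Qed.

Lemma chi_ge2 (R : realType) n (G : ohg n) k (c : 'I_n -> 'I_k) :
  adj R G != 0 -> proper_strong_coloring G c -> (1 < k)%N.
Proof.
move=> An0 pc.
have [/existsP [v /existsP [w Hw]]|/existsPn H] := boolP [exists v, exists w, adj R G v w != 0];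
  last first.
  case/negP: An0; apply/eqP/matrixP => v w; rewrite [RHS]mxE.
  by have := H v => /existsPn /(_ w); rewrite negbK => /eqP.
have vw : v != w by apply: contraNneq Hw => ->; rewrite mxE eqxx.
have [/existsP [e /and3P [eE ve we]]|/existsPn He] :=
    boolP [exists e, [&& e \in edges G, v \in e & w \in e]]; last first.
  case/negP: Hw; rewrite mxE (negbTE vw).
  have E : forall P, [set e in edges G | [&& v \in e, w \in e & P e]] = set0.
    move=> P; apply/setP => e; rewrite !inE.
    apply/negP => /and4P [eE ve we _]; by move: (He e); rewrite eE ve we.
  by rewrite !E !cards0 subrr.
have := pc e eE v w ve we vw.
move=> cvw; have [k2|k1] := ltnP 1 k; first by []. case/negP: cvw; apply/eqP/val_inj => /=.
have := leq_trans (ltn_ord (c v)) k1; have := leq_trans (ltn_ord (c w)) k1.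
by rewrite !ltnS !leqn0 => /eqP -> /eqP ->.
Qed.

Theorem mainTheorem3 (R : realType) (n : nat) (G : ohg n)
  (chi : nat) (l1 lN : R) :
  wf_ohg G ->
  adj R G != 0 ->
  is_strong_chromatic G chi ->
  is_min_eigenvalue G l1 ->
  is_max_eigenvalue G lN ->
  chi%:R = (lN - l1) / (lN - 1) ->
  (forall (h : 'cV[R]_n), is_eigenfun G h l1 ->
   forall c : 'I_n -> 'I_chi, proper_strong_coloring G c ->
     (forall i : 'I_chi, exists v, h v 0 != 0 /\ c v = i) /\
     (forall i j : 'I_chi, (i < j)%N -> 0 <= S_h G c h i j) /\
     (forall i j : 'I_chi, (i < j)%N ->
        RQ G (h_ij c h i j) = lN /\ lN = (chi%:R - l1) / (chi%:R - 1) /\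
        is_eigenfun G (h_ij c h i j) lN)) /\
  lN = (chi%:R - l1) / (chi%:R - 1) /\
  (chi.-1 <= mult G lN)%N /\
  ((1 < mult G l1)%N -> (chi.-1 < mult G lN)%N).
Proof.
move=> wf An0 [[c0 pc0] _] Hmin Hmax Hc.
have chi2 : (1 < chi)%N := chi_ge2 An0 pc0.
have l1N : l1 <= lN by apply: Hmin.2; exact: Hmax.1.
have chiR : 2%:R <= chi%:R :> R by rewrite ler_nat.
have lN1 : 1 < lN.
  case: (ltrgtP lN 1) => // H.
  - have : (lN - l1) / (lN - 1) <= 0.
      by apply: mulr_ge0_le0; [lra | rewrite invr_le0; lra].
    rewrite -Hc => H2; lra.
  - move: Hc; rewrite H subrr invr0 mulr0 => H2; lra.
have Hchi : chi%:R * (lN - 1) = lN - l1.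
  by rewrite Hc mulfVK // subr_eq0 gt_eqF.
have [h eh] := Hmin.1.
split; first by move=> h' eh' c pc; exact: per_h.
split; first exact: lN_formula.
split; first exact: (mult_lower wf Hmax pc0 eh Hchi lN1 chi2).
exact: (mult_strict wf Hmax pc0 Hchi lN1 chi2).
Qed.
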